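(* For $|q|<1$, $$\sum_{n=0}^\infty\frac{(-1)^n(q;q^2)_{2n}\,q^{2n^2+4n}}{(q^8;q^8)_n(-q^2;q^4)_{n+1}}=(-q^9,-q^7,q^8;q^8)_\infty\frac{(q^2;q^4)_\infty}{(q^4;q^4)_\infty}.$$
   Context: $(a;q)_n=\prod_{k=0}^{n-1}(1-aq^k)$, $(a;q)_\infty=\prod_{k\ge0}(1-aq^k)$, $(a_1,\dots,a_r;q)_\infty=\prod_i(a_i;q)_\infty$. *)

(* Defs.v *)
From Stdlib Require Import Reals.
Open Scope R_scope.

Definition Cplx : Type := (R * R)%type.
Definition RtoC (x : R) : Cplx := (x, 0).
Definition C0 : Cplx := (0, 0).
Definition C1 : Cplx := (1, 0).
Definition Cadd (z w : Cplx) : Cplx := (fst z + fst w, snd z + snd w).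
Definition Copp (z : Cplx) : Cplx := (- fst z, - snd z).
Definition Csub (z w : Cplx) : Cplx := Cadd z (Copp w).
Definition Cmul (z w : Cplx) : Cplx :=
  (fst z * fst w - snd z * snd w, fst z * snd w + snd z * fst w).
Definition Cinv (z : Cplx) : Cplx :=
  (fst z / (fst z ^ 2 + snd z ^ 2), - snd z / (fst z ^ 2 + snd z ^ 2)).
Definition Cdiv (z w : Cplx) : Cplx := Cmul z (Cinv w).
Definition Cnorm (z : Cplx) : R := sqrt (fst z ^ 2 + snd z ^ 2).
Fixpoint Cpow (z : Cplx) (n : nat) : Cplx :=
  match n with O => C1 | S m => Cmul (Cpow z m) z end.

Definition Ccv (u : nat -> Cplx) (l : Cplx) : Prop :=
  forall eps : R, eps > 0 -> exists N : nat,
    forall n : nat, (n >= N)%nat -> Cnorm (Csub (u n) l) < eps.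

(* Partial sums: Cpsum f n = f 0 + ... + f (n-1). *)
Fixpoint Cpsum (f : nat -> Cplx) (n : nat) : Cplx :=
  match n with O => C0 | S m => Cadd (Cpsum f m) (f m) end.

Fixpoint qpoch (a q : Cplx) (n : nat) : Cplx :=
  match n with
  | O => C1
  | S m => Cmul (qpoch a q m) (Csub C1 (Cmul a (Cpow q m)))
  end.

Definition qpoch_inf_is (a q L : Cplx) : Prop := Ccv (fun n => qpoch a q n) L.

(* Main.v *)
Require Import Defs.
From Stdlib Require Import Reals Lra Lia Psatz Field Arith.
From Coquelicot Require Import Coquelicot.
From Stdlib Require Import ClassicalEpsilon Classical.
Require Import Defs.
Open Scope R_scope.

Lemma Cfield : field_theory C0 C1 Cadd Cmul Csub Copp Cdiv Cinv (@eq Cplx).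
Proof. exact C_field_theory. Qed.
Add Field Cfield_f : Cfield.

Lemma Cnorm_mul z w : Cnorm (Cmul z w) = Cnorm z * Cnorm w.
Proof. exact (Cmod_mult z w). Qed.
Lemma Cnorm_add z w : Cnorm (Cadd z w) <= Cnorm z + Cnorm w.
Proof. exact (Cmod_triangle z w). Qed.
Lemma Cnorm_opp z : Cnorm (Copp z) = Cnorm z.
Proof. exact (Cmod_opp z). Qed.
Lemma Cnorm_ge0 z : 0 <= Cnorm z.
Proof. exact (Cmod_ge_0 z). Qed.
Lemma Cnorm_C1 : Cnorm C1 = 1.
Proof. exact Cmod_1. Qed.
Lemma Cnorm_C0 : Cnorm C0 = 0.
Proof. exact Cmod_0. Qed.
Lemma Cnorm_eq0 z : Cnorm z = 0 -> z = C0.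
Proof. exact (Cmod_eq_0 z). Qed.
Lemma Cnorm_sub z w : Cnorm (Csub z w) <= Cnorm z + Cnorm w.
Proof. unfold Csub. rewrite <- (Cnorm_opp w). apply Cnorm_add. Qed.
Lemma Cnorm_sub_ge z w : Cnorm z - Cnorm w <= Cnorm (Csub z w).
Proof.
  assert (H := Cnorm_add (Csub z w) w).
  replace (Cadd (Csub z w) w) with z in H by field. lra.
Qed.
Lemma Cnorm_pow z n : Cnorm (Cpow z n) = Cnorm z ^ n.
Proof.
  induction n; simpl. apply Cnorm_C1. rewrite Cnorm_mul, IHn. ring.
Qed.
Lemma Cnorm_inv z : z <> C0 -> Cnorm (Cinv z) = / Cnorm z.
Proof. intro H. exact (Cmod_inv z H). Qed.
Lemma Cnorm_div z w : w <> C0 -> Cnorm (Cdiv z w) = Cnorm z / Cnorm w.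
Proof. intro H. exact (Cmod_div z w H). Qed.
Lemma Cnorm_pos z : z <> C0 -> 0 < Cnorm z.
Proof. intro H. destruct (Cnorm_ge0 z) as [h|h]; auto. symmetry in h. apply Cnorm_eq0 in h. contradiction. Qed.
Lemma Cnorm_neq0 z : 0 < Cnorm z -> z <> C0.
Proof. intros H E. subst. rewrite Cnorm_C0 in H. lra. Qed.

Lemma fst_le z : Rabs (fst z) <= Cnorm z.
Proof. generalize (Rmax_Cmod z). unfold Cnorm, Cmod. intros; eapply Rle_trans; [apply Rmax_l|exact H]. Qed.
Lemma snd_le z : Rabs (snd z) <= Cnorm z.
Proof. generalize (Rmax_Cmod z). unfold Cnorm, Cmod. intros; eapply Rle_trans; [apply Rmax_r|exact H]. Qed.
Lemma Cnorm_le_comp z : Cnorm z <= Rabs (fst z) + Rabs (snd z).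
Proof.
  unfold Cnorm. rewrite <- (sqrt_pow2 (Rabs (fst z) + Rabs (snd z))).
  2: generalize (Rabs_pos (fst z)) (Rabs_pos (snd z)); lra.
  apply sqrt_le_1_alt. rewrite <- (pow2_abs (fst z)), <- (pow2_abs (snd z)).
  generalize (Rabs_pos (fst z)) (Rabs_pos (snd z)); nra.
Qed.
Lemma Cnorm_1_sub_ge z : 1 - Cnorm z <= Cnorm (Csub C1 z).
Proof. generalize (Cnorm_sub_ge C1 z); rewrite Cnorm_C1; auto. Qed.
Lemma Cnorm_1_sub_le z : Cnorm (Csub C1 z) <= 1 + Cnorm z.
Proof. generalize (Cnorm_sub C1 z); rewrite Cnorm_C1; auto. Qed.
Lemma Csub1_neq0 z : Cnorm z < 1 -> Csub C1 z <> C0.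
Proof. intro H. apply Cnorm_neq0. generalize (Cnorm_1_sub_ge z). lra. Qed.

Lemma Cpow_add z m n : Cpow z (m + n) = Cmul (Cpow z m) (Cpow z n).
Proof. induction n; simpl. rewrite Nat.add_0_r. field. rewrite Nat.add_succ_r. simpl. rewrite IHn. field. Qed.
Lemma Cpow_mul z m n : Cpow z (m * n) = Cpow (Cpow z m) n.
Proof. induction n; simpl. rewrite Nat.mul_0_r. reflexivity. rewrite Nat.mul_succ_r, Cpow_add, IHn. reflexivity. Qed.
Lemma Cpow_mul_l z w n : Cpow (Cmul z w) n = Cmul (Cpow z n) (Cpow w n).
Proof. induction n; simpl. field. rewrite IHn. field. Qed.
Lemma Cpow_neq0 z n : z <> C0 -> Cpow z n <> C0.
Proof. intro H. apply Cnorm_neq0. rewrite Cnorm_pow. apply pow_lt. apply Cnorm_pos; auto. Qed.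
Lemma C1_neq0 : C1 <> C0.
Proof. intro H. injection H. intros. apply R1_neq_R0. auto. Qed.
Ltac fld := field; repeat split; try assumption; try exact C1_neq0.
Implicit Types (u : nat -> Cplx) (a b c l Q z : Cplx).

Lemma is_lim_seq_opp' (u : nat -> R) (x : R) : is_lim_seq u x -> is_lim_seq (fun n => - u n) (- x).
Proof. intro H. apply (is_lim_seq_opp u (Finite x)) in H. exact H. Qed.

Lemma Ccv_iff u l : Ccv u l <-> (Un_cv (fun n => fst (u n)) (fst l) /\ Un_cv (fun n => snd (u n)) (snd l)).
Proof.
  split.
  - intro H. split; intros e He; destruct (H e He) as [N HN]; exists N; intros n Hn;
    unfold R_dist; specialize (HN n Hn).
    + eapply Rle_lt_trans; [|exact HN]. apply (fst_le (Csub (u n) l)).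
    + eapply Rle_lt_trans; [|exact HN]. apply (snd_le (Csub (u n) l)).
  - intros [H1 H2] e He.
    destruct (H1 (e/2)) as [N1 HN1]; [lra|]. destruct (H2 (e/2)) as [N2 HN2]; [lra|].
    exists (Nat.max N1 N2). intros n Hn.
    eapply Rle_lt_trans; [apply Cnorm_le_comp|].
    assert (a := HN1 n ltac:(lia)). assert (b := HN2 n ltac:(lia)). unfold R_dist, Rminus in *.
    simpl. lra.
Qed.

Lemma Ccv_lim u l : Ccv u l -> is_lim_seq (fun n => fst (u n)) (fst l) /\ is_lim_seq (fun n => snd (u n)) (snd l).
Proof. intro H; apply Ccv_iff in H; destruct H; split; apply is_lim_seq_Reals; auto. Qed.
Lemma lim_Ccv u l : is_lim_seq (fun n => fst (u n)) (fst l) -> is_lim_seq (fun n => snd (u n)) (snd l) -> Ccv u l.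
Proof. intros; apply Ccv_iff; split; apply is_lim_seq_Reals; auto. Qed.

Lemma Ccv_unique u l1 l2 : Ccv u l1 -> Ccv u l2 -> l1 = l2.
Proof.
  intros H1 H2. apply Ccv_lim in H1; apply Ccv_lim in H2. destruct H1, H2.
  apply is_lim_seq_unique in H, H0, H1, H2.
  destruct l1, l2; simpl in *. rewrite H in H1. rewrite H0 in H2. inversion H1; inversion H2; auto.
Qed.

Lemma Ccv_mul u v a b : Ccv u a -> Ccv v b -> Ccv (fun n => Cmul (u n) (v n)) (Cmul a b).
Proof.
  intros H1 H2. apply Ccv_lim in H1; apply Ccv_lim in H2. destruct H1, H2.
  apply lim_Ccv; simpl.
  - apply is_lim_seq_minus'; apply is_lim_seq_mult'; auto.
  - apply is_lim_seq_plus'; apply is_lim_seq_mult'; auto.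
Qed.
Lemma Ccv_add u v a b : Ccv u a -> Ccv v b -> Ccv (fun n => Cadd (u n) (v n)) (Cadd a b).
Proof.
  intros H1 H2. apply Ccv_lim in H1; apply Ccv_lim in H2. destruct H1, H2.
  apply lim_Ccv; simpl; apply is_lim_seq_plus'; auto.
Qed.
Lemma Ccv_const a : Ccv (fun _ => a) a.
Proof. apply lim_Ccv; apply is_lim_seq_const. Qed.
Lemma Ccv_opp u a : Ccv u a -> Ccv (fun n => Copp (u n)) (Copp a).
Proof.
  intros H1. apply Ccv_lim in H1. destruct H1.
  apply lim_Ccv; simpl; apply is_lim_seq_opp'; auto.
Qed.
Lemma Ccv_sub u v a b : Ccv u a -> Ccv v b -> Ccv (fun n => Csub (u n) (v n)) (Csub a b).
Proof. intros. apply Ccv_add; auto. apply Ccv_opp; auto. Qed.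
Lemma Ccv_inv u a : Ccv u a -> a <> C0 -> Ccv (fun n => Cinv (u n)) (Cinv a).
Proof.
  intros H1 Ha. apply Ccv_lim in H1. destruct H1.
  assert (Hd : fst a ^ 2 + snd a ^ 2 <> 0).
  { intro E. apply Ha. apply Cnorm_eq0. unfold Cnorm. rewrite E. apply sqrt_0. }
  assert (Hl : is_lim_seq (fun n => fst (u n) ^ 2 + snd (u n) ^ 2) (fst a ^ 2 + snd a ^ 2)).
  { apply is_lim_seq_plus'; simpl; repeat (apply is_lim_seq_mult'; auto); apply is_lim_seq_const. }
  apply lim_Ccv; simpl; apply is_lim_seq_div'; auto. apply is_lim_seq_opp'; auto.
Qed.
Lemma Ccv_div u v a b : Ccv u a -> Ccv v b -> b <> C0 -> Ccv (fun n => Cdiv (u n) (v n)) (Cdiv a b).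
Proof. intros. apply Ccv_mul; auto. apply Ccv_inv; auto. Qed.

Lemma Ccv_ext u v a : (forall n, u n = v n) -> Ccv u a -> Ccv v a.
Proof. intros E H e He. destruct (H e He) as [N HN]. exists N. intros n Hn. rewrite <- E. auto. Qed.

Lemma Ccv_subseq u a (phi : nat -> nat) : (forall n, (n <= phi n)%nat) -> Ccv u a -> Ccv (fun n => u (phi n)) a.
Proof. intros Hp H e He. destruct (H e He) as [N HN]. exists N. intros n Hn. apply HN. specialize (Hp n). lia. Qed.

Lemma Ccv_shift u a : Ccv u a -> Ccv (fun n => u (S n)) a.
Proof. intros. apply (Ccv_subseq u a S); auto. Qed.

Lemma Ccv_norm_le u a m r : Ccv u a -> (forall n, Cnorm (Csub (u n) m) <= r) -> Cnorm (Csub a m) <= r.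
Proof.
  intros H Hb. apply Rnot_lt_le. intro Hlt.
  destruct (H (Cnorm (Csub a m) - r)) as [N HN]; [lra|].
  specialize (HN N (le_n _)). specialize (Hb N).
  generalize (Cnorm_sub_ge (Csub a m) (Csub (u N) m)). intro T.
  replace (Csub (Csub a m) (Csub (u N) m)) with (Copp (Csub (u N) a)) in T by field.
  rewrite Cnorm_opp in T. lra.
Qed.

Lemma Ccv_norm_ge u a d : Ccv u a -> (forall n, d <= Cnorm (u n)) -> d <= Cnorm a.
Proof.
  intros H Hb. apply Rnot_lt_le. intro Hlt.
  destruct (H (d - Cnorm a)) as [N HN]; [lra|].
  specialize (HN N (le_n _)). specialize (Hb N).
  generalize (Cnorm_sub_ge (u N) a). lra.
Qed.

Lemma Ccv_0_bound u v : (forall n, Cnorm (u n) <= v n) -> is_lim_seq v 0 -> Ccv u C0.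
Proof.
  intros Hb Hv. apply is_lim_seq_Reals in Hv. intros e He. destruct (Hv e He) as [N HN].
  exists N. intros n Hn. specialize (HN n Hn). unfold R_dist in HN. rewrite Rminus_0_r in HN.
  replace (Csub (u n) C0) with (u n) by field. specialize (Hb n).
  generalize (Rle_abs (v n)). lra.
Qed.

Lemma Ccv_0_bound_ev u v N0 : (forall n, (n >= N0)%nat -> Cnorm (u n) <= v n) -> is_lim_seq v 0 -> Ccv u C0.
Proof.
  intros Hb Hv. apply is_lim_seq_Reals in Hv. intros e He. destruct (Hv e He) as [N HN].
  exists (Nat.max N N0). intros n Hn. specialize (HN n ltac:(lia)). unfold R_dist in HN. rewrite Rminus_0_r in HN.
  replace (Csub (u n) C0) with (u n) by field. specialize (Hb n ltac:(lia)).
  generalize (Rle_abs (v n)). lra.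
Qed.

Lemma Ccv_sub0 u a : Ccv (fun n => Csub (u n) a) C0 -> Ccv u a.
Proof.
  intros H e He. destruct (H e He) as [N HN]. exists N. intros n Hn. specialize (HN n Hn).
  replace (Csub (Csub (u n) a) C0) with (Csub (u n) a) in HN by field. auto.
Qed.

Lemma Ccauchy_conv u w : (forall n, Cnorm (Csub (u (S n)) (u n)) <= w n) ->
  (forall n, 0 <= w n) -> (exists W, Un_cv (fun n => sum_f_R0 w n) W) -> exists l, Ccv u l.
Proof.
  intros Hb Hw [W HW].
  set (s := fun n => sum_f_R0 w n).
  assert (Hc : Cauchy_crit s) by (apply CV_Cauchy; exists W; auto).
  assert (Hdiff : forall n k, Cnorm (Csub (u (S n + k)%nat) (u (S n))) <= s (n + k)%nat - s n).
  { intros n k. induction k.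
    - rewrite !Nat.add_0_r. replace (Csub (u (S n)) (u (S n))) with C0 by field. rewrite Cnorm_C0. lra.
    - replace (S n + S k)%nat with (S (S n + k)) by lia. replace (n + S k)%nat with (S (n+k)) by lia.
      replace (Csub (u (S (S n + k))) (u (S n))) with (Cadd (Csub (u (S (S n + k))) (u (S n + k)%nat)) (Csub (u (S n + k)%nat) (u (S n)))) by field.
      eapply Rle_trans; [apply Cnorm_add|].
      assert (E: s (S (n+k)) = s (n+k)%nat + w (S (n+k))) by reflexivity. rewrite E.
      specialize (Hb (S n + k)%nat). change (S n + k)%nat with (S (n+k)) in *. lra. }
  assert (Hmono : forall n k, 0 <= s (n + k)%nat - s n).
  { intros n k. induction k. rewrite Nat.add_0_r; lra. replace (n + S k)%nat with (S (n+k)) by lia.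
    unfold s in *. simpl. generalize (Hw (S (n+k))). lra. }
  assert (Hcomp : forall (f : Cplx -> R), (forall z, Rabs (f z) <= Cnorm z) -> (forall z w, f (Csub z w) = f z - f w) -> Cauchy_crit (fun n => f (u n))).
  { intros f Hf Hsub e He. destruct (Hc e He) as [N HN]. exists (S N). intros n m Hn Hm. unfold R_dist.
    assert (G : forall n m, (n >= S N)%nat -> (m >= n)%nat -> Rabs (f (u n) - f (u m)) < e).
    { clear n m Hn Hm. intros n m Hn Hm. destruct n as [|n]; [lia|].
      replace m with (S n + (m - S n))%nat by lia.
      rewrite <- Hsub. rewrite <- Rabs_Ropp.
      replace (- f (Csub (u (S n)) (u (S n + (m - S n))%nat))) with (f (Csub (u (S n + (m - S n))%nat) (u (S n)))).
      2:{ rewrite !Hsub. ring. }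
      eapply Rle_lt_trans; [apply Hf|]. eapply Rle_lt_trans; [apply Hdiff|].
      specialize (HN (n + (m - S n))%nat n ltac:(lia) ltac:(lia)). unfold R_dist in HN.
      generalize (Hmono n (m - S n)%nat). intro. rewrite Rabs_right in HN; lra. }
    destruct (Nat.le_ge_cases n m). apply G; auto. rewrite Rabs_minus_sym. apply G; auto. }
  destruct (Rcomplete.R_complete _ (Hcomp fst fst_le ltac:(reflexivity))) as [l1 H1].
  destruct (Rcomplete.R_complete _ (Hcomp snd snd_le ltac:(reflexivity))) as [l2 H2].
  exists (l1, l2). apply Ccv_iff. simpl. auto.
Qed.

Lemma geom_sum_cv r : 0 <= r < 1 -> Un_cv (fun n => sum_f_R0 (fun k => r ^ k) n) (/ (1 - r)).
Proof.
  intros Hr. apply is_lim_seq_Reals.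
  apply is_lim_seq_ext with (fun n => (1 - r ^ (S n)) / (1 - r)).
  { intros n. induction n. simpl. field. lra. simpl sum_f_R0. rewrite <- IHn. simpl. field. lra. }
  replace (/ (1 - r)) with ((1 - 0) / (1 - r)) by (field; lra).
  apply is_lim_seq_div'; [| apply is_lim_seq_const | lra].
  apply is_lim_seq_minus'. apply is_lim_seq_const. apply (is_lim_seq_incr_1 (fun n => r ^ n)).
  apply is_lim_seq_geom. rewrite Rabs_right; lra.
Qed.

Lemma Ccauchy_geom u M r : 0 <= r < 1 -> (forall n, Cnorm (Csub (u (S n)) (u n)) <= M * r ^ n) -> exists l, Ccv u l.
Proof.
  intros Hr Hb. assert (HM : 0 <= M).
  { specialize (Hb 0%nat). simpl in Hb. generalize (Cnorm_ge0 (Csub (u 1%nat) (u 0%nat))). lra. }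
  apply (Ccauchy_conv u (fun n => M * r ^ n)); auto.
  - intros; apply Rmult_le_pos; auto; apply pow_le; lra.
  - exists (M * / (1 - r)). apply is_lim_seq_Reals.
    apply is_lim_seq_ext with (fun n => M * sum_f_R0 (fun k => r ^ k) n).
    { intros n; induction n; simpl; [ring|]. rewrite <- IHn. ring. }
    apply is_lim_seq_mult'. apply is_lim_seq_const. apply is_lim_seq_Reals. apply geom_sum_cv; auto.
Qed.

Fixpoint gs (r : R) (n : nat) : R := match n with O => 0 | S m => gs r m + r ^ m end.
Lemma gs_eq r n : r <> 1 -> gs r n = (1 - r ^ n) / (1 - r).
Proof. intro H. assert (1 - r <> 0) by lra. induction n; simpl. field; auto. rewrite IHn. field; auto. Qed.
Lemma gs_le r n : 0 <= r < 1 -> gs r n <= / (1 - r).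
Proof.
  intro H. rewrite gs_eq by lra. unfold Rdiv. rewrite <- (Rmult_1_l (/ (1 - r))) at 2.
  apply Rmult_le_compat_r. apply Rlt_le, Rinv_0_lt_compat; lra.
  generalize (pow_le r n ltac:(lra)); lra.
Qed.
Lemma gs_ge0 r n : 0 <= r -> 0 <= gs r n.
Proof. intro H; induction n; simpl. lra. generalize (pow_le r n H); lra. Qed.

Lemma pow_le_1 x n : 0 <= x <= 1 -> x ^ n <= 1.
Proof. intro H; induction n; simpl. lra. assert (0 <= x ^ n) by (apply pow_le; lra). nra. Qed.

Lemma exp_ge_1plus x : 1 + x <= exp x.
Proof. destruct (Req_dec x 0). subst. rewrite exp_0. lra. left. apply exp_ineq1; auto. Qed.

Lemma one_minus_ge_exp x al : 0 <= x <= al -> al < 1 -> exp (- (x / (1 - al))) <= 1 - x.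
Proof.
  intros H1 H2. rewrite exp_Ropp. assert (E := exp_ge_1plus (x / (1 - al))).
  assert (0 < 1 - x) by lra.
  assert (HH : 1 <= (1 + x / (1 - al)) * (1 - x)).
  { unfold Rdiv. assert (0 < / (1 - al)) by (apply Rinv_0_lt_compat; lra).
    assert (x * (1 - x) * / (1 - al) >= x).
    { assert ((1 - x) * / (1 - al) >= 1).
      { apply Rle_ge. replace 1 with ((1 - al) * / (1 - al)) at 1 by (field; lra). apply Rmult_le_compat_r; lra. }
      nra. }
    nra. }
  assert (0 < exp (x / (1 - al))) by apply exp_pos.
  apply (Rmult_le_reg_l (exp (x / (1 - al)))); auto. rewrite Rinv_r by lra. nra.
Qed.

Lemma qpoch_S a Q n : qpoch a Q (S n) = Cmul (qpoch a Q n) (Csub C1 (Cmul a (Cpow Q n))).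
Proof. reflexivity. Qed.

Lemma qpoch_norm_le a Q n : Cnorm Q < 1 -> Cnorm (qpoch a Q n) <= exp (Cnorm a / (1 - Cnorm Q)).
Proof.
  intro HQ. assert (HQ0 := Cnorm_ge0 Q). assert (Ha0 := Cnorm_ge0 a).
  assert (G : Cnorm (qpoch a Q n) <= exp (Cnorm a * gs (Cnorm Q) n)).
  { induction n; simpl qpoch; simpl gs.
    - rewrite Cnorm_C1, Rmult_0_r, exp_0; lra.
    - rewrite Cnorm_mul, Rmult_plus_distr_l, exp_plus.
      apply Rmult_le_compat; try apply Cnorm_ge0; auto.
      eapply Rle_trans; [apply Cnorm_1_sub_le|]. rewrite Cnorm_mul, Cnorm_pow. apply exp_ge_1plus. }
  eapply Rle_trans; [exact G|]. 
  destruct (Rle_lt_or_eq_dec _ _ (Rmult_le_compat_l (Cnorm a) _ _ Ha0 (gs_le (Cnorm Q) n ltac:(lra)))) as [h|h].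
  - left. apply exp_increasing. unfold Rdiv. auto.
  - unfold Rdiv. rewrite h. lra.
Qed.

Lemma qpoch_norm_ge a Q n : Cnorm Q < 1 -> Cnorm a < 1 ->
  exp (- (Cnorm a / ((1 - Cnorm Q) * (1 - Cnorm a)))) <= Cnorm (qpoch a Q n).
Proof.
  intros HQ Ha. assert (HQ0 := Cnorm_ge0 Q). assert (Ha0 := Cnorm_ge0 a).
  assert (G : exp (- (Cnorm a * gs (Cnorm Q) n / (1 - Cnorm a))) <= Cnorm (qpoch a Q n)).
  { induction n; simpl qpoch; simpl gs.
    - rewrite Cnorm_C1. replace (- (Cnorm a * 0 / (1 - Cnorm a))) with 0 by (field; lra). rewrite exp_0; lra.
    - rewrite Cnorm_mul.
      replace (- (Cnorm a * (gs (Cnorm Q) n + Cnorm Q ^ n) / (1 - Cnorm a))) with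
        ((- (Cnorm a * gs (Cnorm Q) n / (1 - Cnorm a))) + - (Cnorm a * Cnorm Q ^ n / (1 - Cnorm a))) by (field; lra).
      rewrite exp_plus. apply Rmult_le_compat; try (left; apply exp_pos); auto.
      eapply Rle_trans; [|apply Cnorm_1_sub_ge]. rewrite Cnorm_mul, Cnorm_pow.
      apply one_minus_ge_exp; auto. split. apply Rmult_le_pos; auto; apply pow_le; auto.
      rewrite <- (Rmult_1_r (Cnorm a)) at 2. apply Rmult_le_compat_l; auto. apply pow_le_1; lra. }
  eapply Rle_trans; [|exact G].
  destruct (Rle_lt_or_eq_dec _ _ (Rmult_le_compat_l (Cnorm a) _ _ Ha0 (gs_le (Cnorm Q) n ltac:(lra)))) as [h|h].
  - left. apply exp_increasing. apply Ropp_lt_contravar.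
    replace (Cnorm a / ((1 - Cnorm Q) * (1 - Cnorm a))) with (Cnorm a * / (1 - Cnorm Q) / (1 - Cnorm a)) by (field; lra).
    unfold Rdiv. apply Rmult_lt_compat_r; auto. apply Rinv_0_lt_compat; lra.
  - rewrite h. right. f_equal. field. lra.
Qed.

Lemma qpoch_conv a Q : Cnorm Q < 1 -> exists L, qpoch_inf_is a Q L.
Proof.
  intro HQ. unfold qpoch_inf_is. set (K := exp (Cnorm a / (1 - Cnorm Q))).
  apply (Ccauchy_geom _ (K * Cnorm a) (Cnorm Q)). split; auto. apply Cnorm_ge0.
  intro n. rewrite qpoch_S.
  replace (Csub (Cmul (qpoch a Q n) (Csub C1 (Cmul a (Cpow Q n)))) (qpoch a Q n))
    with (Copp (Cmul (qpoch a Q n) (Cmul a (Cpow Q n)))) by field.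
  rewrite Cnorm_opp, !Cnorm_mul, Cnorm_pow. rewrite Rmult_assoc.
  apply Rmult_le_compat_r. apply Rmult_le_pos; [apply Cnorm_ge0|apply pow_le, Cnorm_ge0].
  apply qpoch_norm_le; auto.
Qed.

Lemma qpoch_lim_neq0 a Q L : Cnorm Q < 1 -> Cnorm a < 1 -> qpoch_inf_is a Q L -> L <> C0.
Proof.
  intros HQ Ha HL. apply Cnorm_neq0.
  eapply Rlt_le_trans; [|apply (Ccv_norm_ge _ _ _ HL); intro n; apply qpoch_norm_ge; auto].
  apply exp_pos.
Qed.

Lemma qpoch_neq0 a Q n : Cnorm Q < 1 -> Cnorm a < 1 -> qpoch a Q n <> C0.
Proof.
  intros. apply Cnorm_neq0. eapply Rlt_le_trans; [|apply qpoch_norm_ge; auto]. apply exp_pos.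
Qed.

Definition ratio a b c Q n :=
  let x := Cpow Q n in
  Cdiv (Cmul (Cmul (Cmul (Csub C1 (Cmul a x)) (Csub C1 (Cmul b x))) c) x)
       (Cmul (Csub C1 (Cmul c x)) (Csub C1 (Cmul (Cmul Q Q) (Cmul x x)))).

Fixpoint T a b c Q n : Cplx :=
  match n with O => C1 | S m => Cmul (T a b c Q m) (ratio a b c Q m) end.

Lemma pow_half_le_1 n : (1/2) ^ n <= 1.
Proof. apply pow_le_1; lra. Qed.

Fixpoint hsum (h : nat -> R) (n : nat) : R := match n with O => h O | S m => hsum h m + h (S m) end.
Lemma hsum_ge h N n : (forall k, 0 <= h k) -> (n <= N)%nat -> h n <= hsum h N.
Proof.
  intros H0 Hn. induction N; simpl.
  - replace n with 0%nat by lia. lra.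
  - destruct (Nat.eq_dec n (S N)). subst. assert (0 <= hsum h N).
    { clear -H0. induction N; simpl; auto. generalize (H0 (S N)); lra. } lra.
    generalize (IHN ltac:(lia)) (H0 (S N)); lra.
Qed.

Lemma geom_dom (G g : nat -> R) N : (forall n, 0 <= G n) -> (forall n, G (S n) = G n * g n) ->
  (forall n, 0 <= g n) -> (forall n, (n >= N)%nat -> g n <= 1/2) -> exists M, 0 <= M /\ forall n, G n <= M * (1/2) ^ n.
Proof.
  intros HG HS Hg HN. set (h := fun n => G n * 2 ^ n).
  assert (h0 : forall k, 0 <= h k). { intro k. unfold h. apply Rmult_le_pos; auto. apply pow_le; lra. }
  exists (hsum h N). split. eapply Rle_trans; [apply (h0 0%nat)|]. apply hsum_ge; auto; lia.
  assert (Hh : forall n, h n <= hsum h N).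
  { induction n. apply hsum_ge; auto; lia.
    destruct (le_lt_dec (S n) N). apply hsum_ge; auto.
    eapply Rle_trans; [|exact IHn]. unfold h. rewrite HS. simpl.
    specialize (HN n ltac:(lia)). assert (0 <= G n * 2 ^ n) by apply h0. specialize (Hg n). nra. }
  intro n. specialize (Hh n). assert (Eh : h n = G n * 2 ^ n) by reflexivity.
  assert (E : (1/2) ^ n * 2 ^ n = 1). { rewrite <- Rpow_mult_distr. replace (1/2*2) with 1 by field. apply pow1. }
  assert (0 < 2 ^ n) by (apply pow_lt; lra).
  apply (Rmult_le_reg_r (2 ^ n)); auto. replace (hsum h N * (1/2) ^ n * 2 ^ n) with (hsum h N * ((1/2) ^ n * 2 ^ n)) by ring.
  rewrite E. lra.
Qed.

Lemma ratio_bound a b c Q r n : Cnorm Q < 1 -> 0 <= r < 1 -> Cnorm c <= r ->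
  Cnorm (ratio a b c Q n) <= Cnorm c *
   ((1 + Cnorm a * Cnorm Q ^ n) * (1 + Cnorm b * Cnorm Q ^ n) * Cnorm Q ^ n / ((1 - r) * (1 - Cnorm Q ^ 2))).
Proof.
  intros HQ Hr Hc. unfold ratio. set (x := Cpow Q n).
  assert (Hx : Cnorm x = Cnorm Q ^ n) by apply Cnorm_pow.
  assert (HQ0 := Cnorm_ge0 Q). assert (Hx1 : Cnorm x <= 1) by (rewrite Hx; apply pow_le_1; lra).
  assert (Hx0 := Cnorm_ge0 x). assert (Hc0 := Cnorm_ge0 c).
  assert (D1 : 1 - r <= Cnorm (Csub C1 (Cmul c x))).
  { eapply Rle_trans; [|apply Cnorm_1_sub_ge]. rewrite Cnorm_mul. nra. }
  assert (D2 : 1 - Cnorm Q ^ 2 <= Cnorm (Csub C1 (Cmul (Cmul Q Q) (Cmul x x)))).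
  { eapply Rle_trans; [|apply Cnorm_1_sub_ge]. rewrite !Cnorm_mul. simpl.
    assert (Cnorm x * Cnorm x <= 1) by nra. nra. }
  assert (P1 : 0 < 1 - r) by lra. assert (P2 : 0 < 1 - Cnorm Q ^ 2) by (simpl; nra).
  rewrite Cnorm_div. 2:{ apply Cnorm_neq0. rewrite Cnorm_mul. apply Rmult_lt_0_compat; lra. }
  rewrite !Cnorm_mul. rewrite <- Hx.
  assert (N1 := Cnorm_1_sub_le (Cmul a x)). assert (N2 := Cnorm_1_sub_le (Cmul b x)).
  rewrite Cnorm_mul in N1, N2.
  set (A := Cnorm (Csub C1 (Cmul a x))) in *. set (B := Cnorm (Csub C1 (Cmul b x))) in *.
  set (E := Cnorm (Csub C1 (Cmul c x))) in *. set (F := Cnorm (Csub C1 (Cmul (Cmul Q Q) (Cmul x x)))) in *.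
  assert (0 <= A) by apply Cnorm_ge0. assert (0 <= B) by apply Cnorm_ge0.
  unfold Rdiv. apply Rle_trans with (A * B * Cnorm c * Cnorm x * / ((1 - r) * (1 - Cnorm Q ^ 2))).
  - apply Rmult_le_compat_l. repeat apply Rmult_le_pos; auto.
    apply Rinv_le_contravar. apply Rmult_lt_0_compat; auto. apply Rmult_le_compat; lra.
  - assert (0 < / ((1 - r) * (1 - Cnorm Q ^ 2))) by (apply Rinv_0_lt_compat, Rmult_lt_0_compat; auto).
    assert (A * B <= (1 + Cnorm a * Cnorm x) * (1 + Cnorm b * Cnorm x)) by (apply Rmult_le_compat; auto).
    assert (0 <= Cnorm c * Cnorm x) by nra.
    set (I := / ((1 - r) * (1 - Cnorm Q ^ 2))) in *.
    replace (A * B * Cnorm c * Cnorm x * I) with ((A * B) * (Cnorm c * Cnorm x * I)) by ring.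
    replace (Cnorm c * ((1 + Cnorm a * Cnorm x) * (1 + Cnorm b * Cnorm x) * Cnorm x * I)) with
      (((1 + Cnorm a * Cnorm x) * (1 + Cnorm b * Cnorm x)) * (Cnorm c * Cnorm x * I)) by ring.
    apply Rmult_le_compat_r; auto. apply Rmult_le_pos; lra.
Qed.

Lemma T_bound a b Q r : Cnorm Q < 1 -> 0 <= r < 1 -> exists M, 0 <= M /\
  forall c, Cnorm c <= r -> forall n, Cnorm (T a b c Q n) <= Cnorm c ^ n * (M * (1/2) ^ n).
Proof.
  intros HQ Hr. assert (HQ0 := Cnorm_ge0 Q).
  set (g := fun n => (1 + Cnorm a * Cnorm Q ^ n) * (1 + Cnorm b * Cnorm Q ^ n) * Cnorm Q ^ n / ((1 - r) * (1 - Cnorm Q ^ 2))).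
  set (G := fix G n := match n with O => 1 | S m => G m * g m end).
  assert (P2 : 0 < 1 - Cnorm Q ^ 2) by (simpl; nra).
  assert (g0 : forall n, 0 <= g n).
  { intro n. unfold g. assert (0 <= Cnorm Q ^ n) by (apply pow_le; auto).
    assert (0 <= Cnorm a) by apply Cnorm_ge0. assert (0 <= Cnorm b) by apply Cnorm_ge0.
    apply Rmult_le_pos. repeat apply Rmult_le_pos; nra. left; apply Rinv_0_lt_compat, Rmult_lt_0_compat; lra. }
  assert (G0 : forall n, 0 <= G n). { induction n; simpl. lra. apply Rmult_le_pos; auto. }
  set (K := (1 + Cnorm a) * (1 + Cnorm b) / ((1 - r) * (1 - Cnorm Q ^ 2))).
  assert (Kp : 0 < K).
  { unfold K. assert (0 <= Cnorm a) by apply Cnorm_ge0. assert (0 <= Cnorm b) by apply Cnorm_ge0.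
    apply Rmult_lt_0_compat. nra. apply Rinv_0_lt_compat, Rmult_lt_0_compat; lra. }
  destruct (pow_lt_1_zero (Cnorm Q) ltac:(rewrite Rabs_right; lra) (1 / (2 * K)) ltac:(apply Rdiv_lt_0_compat; lra)) as [N HN].
  assert (gle : forall n, (n >= N)%nat -> g n <= 1/2).
  { intros n Hn. specialize (HN n Hn). rewrite Rabs_right in HN by (apply Rle_ge, pow_le; auto).
    assert (Hq1 : Cnorm Q ^ n <= 1) by (apply pow_le_1; lra). assert (0 <= Cnorm Q ^ n) by (apply pow_le; auto).
    apply Rle_trans with (K * Cnorm Q ^ n).
    - unfold g, K. unfold Rdiv.
      assert (0 <= Cnorm a) by apply Cnorm_ge0. assert (0 <= Cnorm b) by apply Cnorm_ge0.
      assert (0 < / ((1 - r) * (1 - Cnorm Q ^ 2))) by (apply Rinv_0_lt_compat, Rmult_lt_0_compat; lra).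
      assert ((1 + Cnorm a * Cnorm Q ^ n) * (1 + Cnorm b * Cnorm Q ^ n) <= (1 + Cnorm a) * (1 + Cnorm b)).
      { apply Rmult_le_compat; nra. }
      set (I := / ((1 - r) * (1 - Cnorm Q ^ 2))) in *.
      replace ((1 + Cnorm a * Cnorm Q ^ n) * (1 + Cnorm b * Cnorm Q ^ n) * Cnorm Q ^ n * I) with
        (((1 + Cnorm a * Cnorm Q ^ n) * (1 + Cnorm b * Cnorm Q ^ n)) * (Cnorm Q ^ n * I)) by ring.
      replace ((1 + Cnorm a) * (1 + Cnorm b) * I * Cnorm Q ^ n) with (((1 + Cnorm a) * (1 + Cnorm b)) * (Cnorm Q ^ n * I)) by ring.
      apply Rmult_le_compat_r; auto. apply Rmult_le_pos; lra.
    - apply Rlt_le. replace (1/2) with (K * (1 / (2 * K))) by (field; lra). apply Rmult_lt_compat_l; auto. }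
  destruct (geom_dom G g N G0 (fun n => eq_refl) g0 gle) as [M [HM HGM]].
  exists M. split; auto. intros c Hc n.
  assert (Tb : Cnorm (T a b c Q n) <= Cnorm c ^ n * G n).
  { induction n; simpl T; simpl G.
    - rewrite Cnorm_C1. simpl. lra.
    - rewrite Cnorm_mul. fold G. assert (Hr' := ratio_bound a b c Q r n HQ Hr Hc). fold (g n) in Hr'.
      replace (Cnorm c ^ S n * (G n * g n)) with ((Cnorm c ^ n * G n) * (Cnorm c * g n)) by (simpl; ring).
      apply Rmult_le_compat; auto; apply Cnorm_ge0. }
  eapply Rle_trans; [exact Tb|]. apply Rmult_le_compat_l. apply pow_le, Cnorm_ge0. auto.
Qed.

Lemma series_facts a b Q r : Cnorm Q < 1 -> 0 <= r < 1 -> exists M, 0 <= M /\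
  forall c, Cnorm c <= r ->
    (forall n, Cnorm (T a b c Q n) <= M * (1/2) ^ n) /\
    (exists l, Ccv (Cpsum (T a b c Q)) l) /\
    (forall l, Ccv (Cpsum (T a b c Q)) l -> Cnorm (Csub l C1) <= M * Cnorm c).
Proof.
  intros HQ Hr. destruct (T_bound a b Q r HQ Hr) as [M [HM HB]]. exists M. split; auto.
  intros c Hc. assert (Hc0 := Cnorm_ge0 c).
  assert (HT : forall n, Cnorm (T a b c Q n) <= M * (1/2) ^ n).
  { intro n. eapply Rle_trans; [apply HB; auto|]. rewrite <- (Rmult_1_l (M * _)) at 2.
    apply Rmult_le_compat_r. apply Rmult_le_pos; auto; apply pow_le; lra. apply pow_le_1; lra. }
  split; [exact HT|]. split.
  - apply (Ccauchy_geom _ M (1/2)). lra. intro n. simpl Cpsum.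
    replace (Csub (Cadd (Cpsum (T a b c Q) n) (T a b c Q n)) (Cpsum (T a b c Q) n)) with (T a b c Q n) by field. auto.
  - intros l Hl. apply Ccv_shift in Hl.
    apply (Ccv_norm_le _ _ _ _ Hl). intro N.
    assert (G : Cnorm (Csub (Cpsum (T a b c Q) (S N)) C1) <= M * Cnorm c * (1 - (1/2) ^ N)).
    { induction N.
      - simpl. replace (Csub (Cadd C0 C1) C1) with C0 by field. rewrite Cnorm_C0. simpl. lra.
      - replace (Csub (Cpsum (T a b c Q) (S (S N))) C1) with (Cadd (Csub (Cpsum (T a b c Q) (S N)) C1) (T a b c Q (S N))) by (simpl; field).
        eapply Rle_trans; [apply Cnorm_add|].
        assert (Hn : Cnorm (T a b c Q (S N)) <= Cnorm c * (M * (1/2) ^ S N)).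
        { eapply Rle_trans; [apply HB; auto|]. apply Rmult_le_compat_r. apply Rmult_le_pos; auto; apply pow_le; lra.
          rewrite <- tech_pow_Rmult. apply Rle_trans with (Cnorm c * 1); [|lra]. apply Rmult_le_compat_l; auto. apply pow_le_1; lra. }
        rewrite <- tech_pow_Rmult in Hn |- *. assert (0 <= (1/2)^N) by (apply pow_le; lra). nra. }
    eapply Rle_trans; [exact G|]. assert (0 <= (1/2)^N) by (apply pow_le; lra). assert (0 <= M * Cnorm c) by nra. nra.
Qed.

Definition phi a c Q n :=
  let x := Cpow Q n in
  Copp (Cdiv (Cmul (Cmul x (Csub C1 (Cmul a x))) (Csub C1 c)) (Cmul (Csub a x) (Csub C1 (Cmul c x)))).

Section Tele.
Variables (a b c Q : Cplx).
Hypothesis Hb : b = Cdiv Q a.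
Hypothesis Ha : a <> C0.
Hypothesis HQ0 : Q <> C0.
Hypothesis HQ : Cnorm Q < 1.
Hypothesis Hc : Cnorm c < 1.
Hypothesis Hax : forall n, Csub a (Cpow Q n) <> C0.

Lemma pow_small n : Cnorm (Cpow Q n) <= 1.
Proof. rewrite Cnorm_pow. apply pow_le_1. split; [apply Cnorm_ge0| lra]. Qed.

Lemma nz1 n : Csub C1 (Cmul c (Cpow Q n)) <> C0.
Proof. apply Csub1_neq0. rewrite Cnorm_mul. apply Rle_lt_trans with (Cnorm c * 1); [|lra].
  apply Rmult_le_compat_l. apply Cnorm_ge0. apply pow_small. Qed.
Lemma nz2 n : Csub C1 (Cmul (Cmul Q Q) (Cmul (Cpow Q n) (Cpow Q n))) <> C0.
Proof. apply Csub1_neq0. rewrite !Cnorm_mul. assert (H1 := pow_small n). assert (H2 := Cnorm_ge0 Q). assert (H3 := Cnorm_ge0 (Cpow Q n)).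
  assert (Cnorm Q * Cnorm Q < 1) by nra. assert (Cnorm (Cpow Q n) * Cnorm (Cpow Q n) <= 1) by nra.
  assert (0 <= Cnorm Q * Cnorm Q) by nra. nra. Qed.
Lemma nz3 n : Csub C1 (Cmul (Cmul c Q) (Cpow Q n)) <> C0.
Proof. replace (Cmul (Cmul c Q) (Cpow Q n)) with (Cmul c (Cpow Q (S n))) by (simpl; field). apply nz1. Qed.

Lemma T_phi n : T (Cmul a Q) (Cdiv b Q) (Cmul c Q) Q n = Cmul (T a b c Q n) (phi a c Q n).
Proof.
  induction n.
  - simpl. unfold phi. simpl. assert (H1 := Hax 0). assert (H2 := nz1 0). simpl in H1, H2.
    assert (Csub C1 c <> C0) by (apply Csub1_neq0; auto).
    replace (Cmul c C1) with c in H2 by field. field. repeat split; auto.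
  - simpl T. rewrite IHn. unfold phi, ratio. simpl Cpow. subst b.
    assert (H1 := Hax n). assert (H2 := Hax (S n)). simpl Cpow in H2.
    assert (H3 := nz1 n). assert (H4 := nz2 n). assert (H5 := nz3 n).
    assert (H7 := nz1 (S n)). simpl Cpow in H7.
    field. repeat split; auto; intro E; apply H7; exact E.
Qed.

Definition Wt N := let x := Cpow Q N in
  Cmul (T a b c Q N) (Cdiv (Cmul (Csub C1 c) (Cmul a (Csub C1 (Cmul x x)))) (Csub a x)).

Lemma tele N : Csub (Cmul (Csub C1 (Cmul a c)) (Cpsum (T (Cmul a Q) (Cdiv b Q) (Cmul c Q) Q) N))
                    (Cmul (Csub C1 c) (Cpsum (T a b c Q) N)) = Wt N.
Proof.
  induction N.
  - unfold Wt. simpl. assert (H1 := Hax 0). simpl in H1. field. auto.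
  - simpl Cpsum. rewrite T_phi.
    transitivity (Cadd (Csub (Cmul (Csub C1 (Cmul a c)) (Cpsum (T (Cmul a Q) (Cdiv b Q) (Cmul c Q) Q) N))
                    (Cmul (Csub C1 c) (Cpsum (T a b c Q) N)))
                    (Cmul (T a b c Q N) (Csub (Cmul (Csub C1 (Cmul a c)) (phi a c Q N)) (Csub C1 c)))).
    { field. }
    rewrite IHN. unfold Wt. simpl T. unfold phi, ratio. simpl Cpow. rewrite Hb.
    assert (H1 := Hax N). assert (H2 := Hax (S N)). simpl Cpow in H2.
    assert (H3 := nz1 N). assert (H4 := nz2 N).
    field. repeat split; auto.
Qed.

Lemma tele_lim M l1 l2 : 0 <= M -> (forall n, Cnorm (T a b c Q n) <= M * (1/2) ^ n) ->
  Ccv (Cpsum (T a b c Q)) l1 -> Ccv (Cpsum (T (Cmul a Q) (Cdiv b Q) (Cmul c Q) Q)) l2 ->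
  Cmul (Csub C1 (Cmul a c)) l2 = Cmul (Csub C1 c) l1.
Proof.
  intros HM HT H1 H2.
  assert (L : Ccv (fun N => Csub (Cmul (Csub C1 (Cmul a c)) (Cpsum (T (Cmul a Q) (Cdiv b Q) (Cmul c Q) Q) N))
                    (Cmul (Csub C1 c) (Cpsum (T a b c Q) N)))
               (Csub (Cmul (Csub C1 (Cmul a c)) l2) (Cmul (Csub C1 c) l1))).
  { apply Ccv_sub; apply Ccv_mul; auto; apply Ccv_const. }
  assert (L0 : Ccv (fun N => Csub (Cmul (Csub C1 (Cmul a c)) (Cpsum (T (Cmul a Q) (Cdiv b Q) (Cmul c Q) Q) N))
                    (Cmul (Csub C1 c) (Cpsum (T a b c Q) N))) C0).
  { apply Ccv_ext with Wt. intro; symmetry; apply tele.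
    assert (Hap := Cnorm_pos a Ha).
    destruct (pow_lt_1_zero (Cnorm Q) ltac:(rewrite Rabs_right; [lra| apply Rle_ge, Cnorm_ge0]) (Cnorm a / 2) ltac:(lra)) as [N0 HN0].
    apply (Ccv_0_bound_ev _ (fun n => 8 * M * (1/2) ^ n) N0).
    - intros n Hn. specialize (HN0 n Hn). rewrite Rabs_right in HN0 by (apply Rle_ge, pow_le, Cnorm_ge0).
      rewrite <- Cnorm_pow in HN0. unfold Wt. set (x := Cpow Q n) in *.
      rewrite Cnorm_mul, Cnorm_div by apply Hax. rewrite !Cnorm_mul.
      assert (Hx1 : Cnorm x <= 1) by apply pow_small. assert (Hx0 := Cnorm_ge0 x).
      assert (D : Cnorm a / 2 <= Cnorm (Csub a x)) by (generalize (Cnorm_sub_ge a x); lra).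
      assert (E1 : Cnorm (Csub C1 c) <= 2) by (generalize (Cnorm_1_sub_le c); lra).
      assert (E2 : Cnorm (Csub C1 (Cmul x x)) <= 2) by (generalize (Cnorm_1_sub_le (Cmul x x)); rewrite Cnorm_mul; nra).
      assert (Ht := HT n). assert (Ht0 := Cnorm_ge0 (T a b c Q n)).
      assert (F : Cnorm (Csub C1 c) * (Cnorm a * Cnorm (Csub C1 (Cmul x x))) / Cnorm (Csub a x) <= 8).
      { apply Rle_trans with (2 * (Cnorm a * 2) / (Cnorm a / 2)).
        - unfold Rdiv. apply Rmult_le_compat.
          + apply Rmult_le_pos; [apply Cnorm_ge0|]. apply Rmult_le_pos; [lra|apply Cnorm_ge0].
          + left. apply Rinv_0_lt_compat; lra.
          + apply Rmult_le_compat; try apply Cnorm_ge0; auto. apply Rmult_le_pos; [lra|apply Cnorm_ge0].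
            apply Rmult_le_compat_l; lra.
          + apply Rinv_le_contravar; lra.
        - right. field. lra. }
      assert (0 <= Cnorm (Csub C1 c) * (Cnorm a * Cnorm (Csub C1 (Cmul x x))) / Cnorm (Csub a x)).
      { unfold Rdiv. apply Rmult_le_pos. apply Rmult_le_pos; [apply Cnorm_ge0|]. apply Rmult_le_pos; [lra|apply Cnorm_ge0].
        left; apply Rinv_0_lt_compat; lra. }
      replace (8 * M * (1/2) ^ n) with ((M * (1/2)^n) * 8) by ring.
      apply Rmult_le_compat; auto.
    - replace 0 with (8 * M * 0) by ring. apply is_lim_seq_mult'. apply is_lim_seq_const. apply is_lim_seq_geom. rewrite Rabs_right; lra. }
  assert (E := Ccv_unique _ _ _ L L0).
  replace (Cmul (Csub C1 (Cmul a c)) l2) with (Cadd (Csub (Cmul (Csub C1 (Cmul a c)) l2) (Cmul (Csub C1 c) l1)) (Cmul (Csub C1 c) l1)) by field.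
  rewrite E. field.
Qed.
End Tele.

Lemma ratio_sym a b c Q n : ratio a b c Q n = ratio b a c Q n.
Proof. unfold ratio. f_equal. f_equal. f_equal. ring. Qed.
Lemma T_sym a b c Q n : T a b c Q n = T b a c Q n.
Proof. induction n; simpl; auto. rewrite IHn, ratio_sym. reflexivity. Qed.

Lemma Cpsum_ext f g N : (forall n, f n = g n) -> Cpsum f N = Cpsum g N.
Proof. intro H. induction N; simpl; auto. rewrite IHN, H. reflexivity. Qed.
Lemma Cpsum_scale f k N : Cpsum (fun n => Cmul (f n) k) N = Cmul (Cpsum f N) k.
Proof. induction N; simpl. field. rewrite IHN. field. Qed.

Lemma Cnorm_lt1_pow z n : Cnorm z < 1 -> Cnorm (Cpow z n) <= 1.
Proof. intro; rewrite Cnorm_pow. apply pow_le_1. split; [apply Cnorm_ge0|lra]. Qed.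

Section Iter.
Variable t : Cplx.
Hypothesis Ht0 : t <> C0.
Hypothesis Ht : Cnorm t < 1.

Let Q := Cpow t 4.
Let c0 := Copp (Cpow t 6).
Let r := Cnorm c0.

Lemma nt_pos : 0 < Cnorm t.
Proof. apply Cnorm_pos; auto. Qed.
Lemma npow_lt k : (1 <= k)%nat -> Cnorm (Cpow t k) < 1.
Proof.
  intro Hk. rewrite Cnorm_pow. assert (H := nt_pos). destruct k. lia.
  simpl. assert (Cnorm t ^ k <= 1) by (apply pow_le_1; lra). nra.
Qed.
Lemma npow_le_t k : (1 <= k)%nat -> Cnorm (Cpow t k) <= Cnorm t.
Proof.
  intro Hk. rewrite Cnorm_pow. assert (H := nt_pos). destruct k. lia.
  simpl. assert (Cnorm t ^ k <= 1) by (apply pow_le_1; lra). nra.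
Qed.

Lemma HQ : Cnorm Q < 1. Proof. apply npow_lt; lia. Qed.
Lemma HQ0 : Q <> C0. Proof. apply Cpow_neq0; auto. Qed.
Lemma Hr : 0 <= r < 1.
Proof. unfold r, c0. rewrite Cnorm_opp. split. apply Cnorm_ge0. apply npow_lt; lia. Qed.

Lemma Qpow_small n : (1 <= n)%nat -> Cnorm (Cpow Q n) < Cnorm t.
Proof.
  intro Hn. unfold Q. rewrite <- Cpow_mul. rewrite Cnorm_pow. assert (H := nt_pos).
  replace (4 * n)%nat with (S (S (4 * n - 2)) ) by lia. rewrite <- !tech_pow_Rmult.
  assert (Cnorm t ^ (4 * n - 2) <= 1) by (apply pow_le_1; lra).
  assert (0 <= Cnorm t ^ (4 * n - 2)) by (apply pow_le; lra).
  assert (Cnorm t * Cnorm t ^ (4 * n - 2) <= Cnorm t) by nra.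
  assert (Cnorm t * (Cnorm t * Cnorm t ^ (4 * n - 2)) <= Cnorm t * Cnorm t) by (apply Rmult_le_compat_l; lra).
  nra.
Qed.

Lemma Hax1 n : Csub t (Cpow Q n) <> C0.
Proof.
  apply Cnorm_neq0. destruct n.
  - simpl. replace (Csub t C1) with (Copp (Csub C1 t)) by field. rewrite Cnorm_opp.
    generalize (Cnorm_1_sub_ge t). lra.
  - generalize (Cnorm_sub_ge t (Cpow Q (S n))) (Qpow_small (S n) ltac:(lia)). lra.
Qed.
Lemma Hax2 n : Csub (Cinv t) (Cpow Q n) <> C0.
Proof.
  apply Cnorm_neq0. assert (H := nt_pos).
  assert (Hi : 1 < Cnorm (Cinv t)).
  { rewrite Cnorm_inv by auto. replace 1 with (/1) by field. apply Rinv_lt_contravar; lra. }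
  assert (Cnorm (Cpow Q n) <= 1) by (apply Cnorm_lt1_pow, HQ).
  generalize (Cnorm_sub_ge (Cinv t) (Cpow Q n)). lra.
Qed.

Definition S1 c := epsilon (inhabits C0) (fun l => Ccv (Cpsum (T t (Cpow t 3) c Q)) l).
Definition S2 c := epsilon (inhabits C0) (fun l => Ccv (Cpsum (T (Cinv t) (Cpow t 5) c Q)) l).

Lemma facts1 : exists M, 0 <= M /\ forall c, Cnorm c <= r ->
   (forall n, Cnorm (T t (Cpow t 3) c Q n) <= M * (1/2) ^ n) /\
   Ccv (Cpsum (T t (Cpow t 3) c Q)) (S1 c) /\ Cnorm (Csub (S1 c) C1) <= M * Cnorm c.
Proof.
  destruct (series_facts t (Cpow t 3) Q r HQ Hr) as [M [HM H]]. exists M. split; auto.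
  intros c Hc. destruct (H c Hc) as [H1 [H2 H3]]. split; auto.
  assert (E : Ccv (Cpsum (T t (Cpow t 3) c Q)) (S1 c)) by (unfold S1; apply epsilon_spec; auto).
  split; auto.
Qed.
Lemma facts2 : exists M, 0 <= M /\ forall c, Cnorm c <= r ->
   (forall n, Cnorm (T (Cinv t) (Cpow t 5) c Q n) <= M * (1/2) ^ n) /\
   Ccv (Cpsum (T (Cinv t) (Cpow t 5) c Q)) (S2 c).
Proof.
  destruct (series_facts (Cinv t) (Cpow t 5) Q r HQ Hr) as [M [HM H]]. exists M. split; auto.
  intros c Hc. destruct (H c Hc) as [H1 [H2 H3]]. split; auto.
  unfold S2; apply epsilon_spec; auto.
Qed.

Lemma cQ_le c : Cnorm c <= r -> Cnorm (Cmul c Q) <= r.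
Proof. intro H. rewrite Cnorm_mul. assert (HQ' := HQ). generalize (Cnorm_ge0 Q) (Cnorm_ge0 c). nra. Qed.

Lemma step c : Cnorm c <= r ->
  Cmul (Cmul (Csub C1 (Cmul t c)) (Csub C1 (Cmul (Cpow t 3) c))) (S1 (Cmul (Cmul c Q) Q)) =
  Cmul (Cmul (Csub C1 c) (Csub C1 (Cmul c Q))) (S1 c).
Proof.
  intro Hc. destruct facts1 as [M1 [HM1 F1]]. destruct facts2 as [M2 [HM2 F2]].
  assert (Hc1 : Cnorm c < 1) by (generalize Hr; lra).
  assert (Hc2 : Cnorm c <= r) by auto.
  assert (HcQ := cQ_le c Hc). assert (HcQQ := cQ_le _ HcQ).
  destruct (F1 c Hc) as [T1 [C1' _]]. destruct (F2 _ HcQ) as [T2 C2]. destruct (F1 _ HcQQ) as [T3 [C3 _]].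
  assert (R1 : Cmul (Csub C1 (Cmul t c)) (S2 (Cmul c Q)) = Cmul (Csub C1 c) (S1 c)).
  { assert (Hb : Cpow t 3 = Cdiv Q t) by (unfold Q; simpl; fld).
    assert (L2 : Ccv (Cpsum (T (Cmul t Q) (Cdiv (Cpow t 3) Q) (Cmul c Q) Q)) (S2 (Cmul c Q))).
    { eapply Ccv_ext; [|exact C2]. intro N. apply Cpsum_ext. intro n. rewrite T_sym.
      f_equal; unfold Q; simpl; fld. }
    exact (tele_lim t (Cpow t 3) c Q Hb Ht0 HQ0 HQ Hc1 Hax1 M1 _ _ HM1 T1 C1' L2). }
  assert (R2 : Cmul (Csub C1 (Cmul (Cinv t) (Cmul c Q))) (S1 (Cmul (Cmul c Q) Q)) = Cmul (Csub C1 (Cmul c Q)) (S2 (Cmul c Q))).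
  { assert (Hb : Cpow t 5 = Cdiv Q (Cinv t)) by (unfold Q; simpl; fld).
    assert (Hi : Cinv t <> C0).
    { intro E. apply Ht0. replace t with (Cinv (Cinv t)) by (fld). rewrite E. unfold Cinv, C0. simpl.
      unfold Rdiv. rewrite !Rmult_0_l. f_equal; ring. }
    assert (Hc' : Cnorm (Cmul c Q) < 1) by (generalize Hr; lra).
    assert (L2 : Ccv (Cpsum (T (Cmul (Cinv t) Q) (Cdiv (Cpow t 5) Q) (Cmul (Cmul c Q) Q) Q)) (S1 (Cmul (Cmul c Q) Q))).
    { eapply Ccv_ext; [|exact C3]. intro N. apply Cpsum_ext. intro n. rewrite T_sym.
      f_equal; unfold Q; simpl; fld. }
    exact (tele_lim (Cinv t) (Cpow t 5) (Cmul c Q) Q Hb Hi HQ0 HQ Hc' Hax2 M2 _ _ HM2 T2 C2 L2). }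
  replace (Cmul (Cinv t) (Cmul c Q)) with (Cmul (Cpow t 3) c) in R2 by (unfold Q; simpl; fld).
  transitivity (Cmul (Csub C1 (Cmul t c)) (Cmul (Csub C1 (Cmul (Cpow t 3) c)) (S1 (Cmul (Cmul c Q) Q)))).
  { ring. }
  rewrite R2. transitivity (Cmul (Csub C1 (Cmul c Q)) (Cmul (Csub C1 (Cmul t c)) (S2 (Cmul c Q)))). ring.
  rewrite R1. ring.
Qed.

Definition cN N := Cmul c0 (Cpow (Cmul Q Q) N).

Lemma cN_le N : Cnorm (cN N) <= r.
Proof.
  unfold cN. rewrite Cnorm_mul. fold r. assert (H := Cnorm_lt1_pow (Cmul Q Q) N).
  rewrite Cnorm_mul in H. assert (HQ' := HQ). assert (Cnorm Q * Cnorm Q < 1) by (generalize (Cnorm_ge0 Q); nra).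
  specialize (H ltac:(lra)). generalize (Cnorm_ge0 (Cpow (Cmul Q Q) N)) Hr. nra.
Qed.

Lemma CpowQ2 N : Cpow Q (2 * N) = Cpow (Cmul Q Q) N.
Proof. rewrite Cpow_mul. f_equal. simpl. ring. Qed.

Lemma iter N : Cmul (qpoch c0 Q (2 * N)) (S1 c0) =
  Cmul (Cmul (qpoch (Cmul t c0) (Cmul Q Q) N) (qpoch (Cmul (Cpow t 3) c0) (Cmul Q Q) N)) (S1 (cN N)).
Proof.
  induction N.
  - simpl. replace (cN 0) with c0 by (unfold cN; simpl; ring). ring.
  - replace (2 * S N)%nat with (S (S (2 * N))) by lia. rewrite !qpoch_S.
    replace (Cpow Q (S (2 * N))) with (Cmul (Cpow Q (2*N)) Q) by reflexivity. rewrite CpowQ2.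
    assert (St := step (cN N) (cN_le N)).
    replace (Cmul (Cmul (cN N) Q) Q) with (cN (S N)) in St by (unfold cN; simpl; ring).
    set (v := qpoch c0 Q (2 * N)) in *. set (u1 := qpoch (Cmul t c0) (Cmul Q Q) N) in *.
    set (u2 := qpoch (Cmul (Cpow t 3) c0) (Cmul Q Q) N) in *.
    set (x := Cpow (Cmul Q Q) N) in *.
    transitivity (Cmul (Cmul (Csub C1 (cN N)) (Csub C1 (Cmul (cN N) Q))) (Cmul v (S1 c0))).
    { unfold cN. fold x. ring. }
    rewrite IHN.
    transitivity (Cmul (Cmul u1 u2) (Cmul (Cmul (Csub C1 (cN N)) (Csub C1 (Cmul (cN N) Q))) (S1 (cN N)))).
    { ring. }
    rewrite <- St. unfold cN. fold x. ring.
Qed.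

Lemma S1_lim X Y Z : qpoch_inf_is (Cmul t c0) (Cmul Q Q) X -> qpoch_inf_is (Cmul (Cpow t 3) c0) (Cmul Q Q) Y ->
  qpoch_inf_is c0 Q Z -> Ccv (Cpsum (T t (Cpow t 3) c0 Q)) (Cdiv (Cmul X Y) Z).
Proof.
  intros HX HY HZ. destruct facts1 as [M1 [HM1 F1]].
  assert (Hc0 : Cnorm c0 <= r) by (unfold r; lra).
  destruct (F1 c0 Hc0) as [_ [Hconv _]].
  assert (HZ0 : Z <> C0) by (apply (qpoch_lim_neq0 c0 Q); auto; [apply HQ| generalize Hr; unfold r; lra]).
  assert (L1 : Ccv (fun N => Cmul (qpoch c0 Q (2 * N)) (S1 c0)) (Cmul Z (S1 c0))).
  { apply Ccv_mul; [|apply Ccv_const]. apply (Ccv_subseq (fun n => qpoch c0 Q n) Z (fun N => 2 * N)%nat); auto. intro; lia. }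
  assert (Lc : Ccv (fun N => S1 (cN N)) C1).
  { apply Ccv_sub0. apply (Ccv_0_bound _ (fun N => M1 * (r * (Cnorm Q * Cnorm Q) ^ N))).
    - intro N. destruct (F1 (cN N) (cN_le N)) as [_ [_ B]]. eapply Rle_trans; [exact B|].
      apply Rmult_le_compat_l; auto. unfold cN. rewrite Cnorm_mul, Cnorm_pow, Cnorm_mul. fold r. lra.
    - replace 0 with (M1 * (r * 0)) by ring. apply is_lim_seq_mult'; [apply is_lim_seq_const|].
      apply is_lim_seq_mult'; [apply is_lim_seq_const|]. apply is_lim_seq_geom.
      assert (HQ' := HQ). assert (H0 := Cnorm_ge0 Q). rewrite Rabs_right; nra. }
  assert (L2 : Ccv (fun N => Cmul (Cmul (qpoch (Cmul t c0) (Cmul Q Q) N) (qpoch (Cmul (Cpow t 3) c0) (Cmul Q Q) N)) (S1 (cN N)))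
                   (Cmul (Cmul X Y) C1)).
  { apply Ccv_mul; auto. apply Ccv_mul; auto. }
  assert (L1' : Ccv (fun N => Cmul (Cmul (qpoch (Cmul t c0) (Cmul Q Q) N) (qpoch (Cmul (Cpow t 3) c0) (Cmul Q Q) N)) (S1 (cN N)))
                   (Cmul Z (S1 c0))).
  { eapply Ccv_ext; [|exact L1]. intro N. apply iter. }
  assert (E := Ccv_unique _ _ _ L1' L2).
  replace (Cdiv (Cmul X Y) Z) with (S1 c0); auto.
  replace (Cmul X Y) with (Cmul Z (S1 c0)) by (rewrite E; ring). fld.
Qed.
End Iter.

Fixpoint tri (n : nat) : nat := match n with O => O | S m => (tri m + m)%nat end.
Lemma tri_eq n : (2 * tri n + n = n * n)%nat.
Proof. induction n; simpl tri; [reflexivity|]. nia. Qed.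

Lemma T_closed a b c Q n : Cnorm Q < 1 -> Cnorm c < 1 ->
  T a b c Q n = Cdiv (Cmul (Cmul (Cmul (qpoch a Q n) (qpoch b Q n)) (Cpow c n)) (Cpow Q (tri n)))
                     (Cmul (qpoch c Q n) (qpoch (Cmul Q Q) (Cmul Q Q) n)).
Proof.
  intros HQ Hc.
  assert (HQQ : Cnorm (Cmul Q Q) < 1) by (rewrite Cnorm_mul; generalize (Cnorm_ge0 Q); nra).
  induction n.
  - simpl. fld.
  - simpl T. rewrite IHn. unfold ratio. simpl tri. rewrite Cpow_add. rewrite !qpoch_S.
    rewrite Cpow_mul_l.
    assert (H1 := qpoch_neq0 c Q n HQ Hc). assert (H2 := qpoch_neq0 (Cmul Q Q) (Cmul Q Q) n HQQ HQQ).
    assert (H3 : Csub C1 (Cmul c (Cpow Q n)) <> C0).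
    { apply Csub1_neq0. rewrite Cnorm_mul. apply Rle_lt_trans with (Cnorm c * 1); [|lra].
      apply Rmult_le_compat_l. apply Cnorm_ge0. apply Cnorm_lt1_pow; auto. }
    assert (H4 : Csub C1 (Cmul (Cmul Q Q) (Cmul (Cpow Q n) (Cpow Q n))) <> C0).
    { apply Csub1_neq0. rewrite !Cnorm_mul. assert (Hx := Cnorm_lt1_pow Q n HQ). assert (Hx0 := Cnorm_ge0 (Cpow Q n)).
      rewrite Cnorm_mul in HQQ. assert (0 <= Cnorm Q * Cnorm Q) by (generalize (Cnorm_ge0 Q); nra).
      assert (Cnorm (Cpow Q n) * Cnorm (Cpow Q n) <= 1) by nra. nra. }
    replace (Cpow c (S n)) with (Cmul (Cpow c n) c) by reflexivity. fld.
Qed.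

Lemma Copp_eq z : Copp z = Cmul (RtoC (-1)) z.
Proof. destruct z as [x y]. unfold Copp, Cmul, RtoC. simpl. f_equal; ring. Qed.

Lemma sign_pow t n : Cmul (Cpow (RtoC (-1)) n) (Cpow t (2 * n * n + 4 * n)) =
  Cmul (Cpow (Copp (Cpow t 6)) n) (Cpow (Cpow t 4) (tri n)).
Proof.
  rewrite Copp_eq, Cpow_mul_l. rewrite <- !Cpow_mul.
  assert (H := tri_eq n). replace (2 * n * n + 4 * n)%nat with (6 * n + 4 * tri n)%nat by nia.
  rewrite Cpow_add. ring.
Qed.

Lemma pochA t n : qpoch t (Cpow t 2) (2 * n) = Cmul (qpoch t (Cpow t 4) n) (qpoch (Cpow t 3) (Cpow t 4) n).
Proof.
  induction n.
  - simpl. ring.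
  - replace (2 * S n)%nat with (S (S (2 * n))) by lia. rewrite !qpoch_S. rewrite IHn.
    replace (Cpow (Cpow t 2) (S (2 * n))) with (Cmul (Cpow (Cpow t 2) (2 * n)) (Cpow t 2)) by reflexivity.
    replace (Cpow (Cpow t 2) (2 * n)) with (Cpow (Cpow t 4) n) by (rewrite <- !Cpow_mul; f_equal; lia).
    set (x := Cpow (Cpow t 4) n). simpl Cpow. ring.
Qed.

Lemma pochD t n : qpoch (Copp (Cpow t 2)) (Cpow t 4) (S n) =
  Cmul (Csub C1 (Copp (Cpow t 2))) (qpoch (Copp (Cpow t 6)) (Cpow t 4) n).
Proof.
  induction n.
  - simpl. ring.
  - rewrite qpoch_S, IHn, qpoch_S.
    replace (Cpow (Cpow t 4) (S n)) with (Cmul (Cpow (Cpow t 4) n) (Cpow t 4)) by reflexivity.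
    set (x := Cpow (Cpow t 4) n). simpl Cpow. ring.
Qed.

Lemma pochE t N : qpoch (Cpow t 4) (Cpow t 4) (2 * N) =
  Cmul (Cmul (qpoch (Cpow t 8) (Cpow t 8) N) (qpoch (Cpow t 2) (Cpow t 4) N)) (qpoch (Copp (Cpow t 2)) (Cpow t 4) N).
Proof.
  induction N.
  - simpl. ring.
  - replace (2 * S N)%nat with (S (S (2 * N))) by lia. rewrite !qpoch_S. rewrite IHN.
    replace (Cpow (Cpow t 4) (S (2 * N))) with (Cmul (Cpow (Cpow t 4) (2 * N)) (Cpow t 4)) by reflexivity.
    replace (Cpow (Cpow t 4) (2 * N)) with (Cmul (Cpow (Cpow t 4) N) (Cpow (Cpow t 4) N)) by (rewrite <- Cpow_add; f_equal; lia).
    replace (Cpow (Cpow t 8) N) with (Cmul (Cpow (Cpow t 4) N) (Cpow (Cpow t 4) N)).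
    2:{ rewrite <- Cpow_mul_l. f_equal. simpl. ring. }
    set (x := Cpow (Cpow t 4) N). simpl Cpow. ring.
Qed.

Lemma Ccv_unshift u a : Ccv (fun n => u (S n)) a -> Ccv u a.
Proof. intros H e He. destruct (H e He) as [N HN]. exists (S N). intros n Hn. destruct n. lia. apply HN. lia. Qed.

Lemma qpoch_zero a Q n : a = C0 -> qpoch a Q n = C1.
Proof. intro H; subst. induction n. reflexivity. rewrite qpoch_S, IHn. ring. Qed.

Lemma Cpow0 k : Cpow C0 (S k) = C0.
Proof. change (Cpow C0 (S k)) with (Cmul (Cpow C0 k) C0). ring. Qed.

Section Final.
Variable q : Cplx.
Hypothesis hq : Cnorm q < 1.
Hypothesis hq0 : q <> C0.

Let term n := Cdiv (Cmul (Cmul (Cpow (RtoC (-1)) n) (qpoch q (Cpow q 2) (2 * n)))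
                      (Cpow q (2 * n * n + 4 * n)))
                (Cmul (qpoch (Cpow q 8) (Cpow q 8) n)
                      (qpoch (Copp (Cpow q 2)) (Cpow q 4) (S n))).

Let k0 := Csub C1 (Copp (Cpow q 2)).
Let lt1 k : (1 <= k)%nat -> Cnorm (Cpow q k) < 1 := npow_lt q hq0 hq k.
Let Q := Cpow q 4.
Let c0 := Copp (Cpow q 6).

Lemma k0nz : k0 <> C0.
Proof. apply Csub1_neq0. rewrite Cnorm_opp. apply lt1; lia. Qed.
Lemma nQ : Cnorm Q < 1. Proof. apply lt1; lia. Qed.
Lemma nc0 : Cnorm c0 < 1. Proof. unfold c0; rewrite Cnorm_opp; apply lt1; lia. Qed.

Lemma term_eq n : term n = Cmul (T q (Cpow q 3) c0 Q n) (Cinv k0).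
Proof.
  unfold term. rewrite pochA, pochD. rewrite T_closed by (apply nQ || apply nc0).
  replace (Cpow q 8) with (Cmul Q Q) by (unfold Q; simpl; ring).
  replace (Cmul (Cmul (Cpow (RtoC (-1)) n) (Cmul (qpoch q (Cpow q 4) n) (qpoch (Cpow q 3) (Cpow q 4) n))) (Cpow q (2 * n * n + 4 * n)))
    with (Cmul (Cmul (qpoch q (Cpow q 4) n) (qpoch (Cpow q 3) (Cpow q 4) n)) (Cmul (Cpow (RtoC (-1)) n) (Cpow q (2 * n * n + 4 * n)))) by ring.
  rewrite sign_pow. fold Q. fold c0. fold k0.
  assert (HQQ : Cnorm (Cmul Q Q) < 1) by (rewrite Cnorm_mul; generalize (Cnorm_ge0 Q) nQ; nra).
  assert (H1 := qpoch_neq0 c0 Q n nQ nc0). assert (H2 := qpoch_neq0 (Cmul Q Q) (Cmul Q Q) n HQQ HQQ).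
  assert (H3 := k0nz). fld.
Qed.
End Final.

Theorem main_nz (q : Cplx) (hq : Cnorm q < 1) (hq0 : q <> C0) :
  exists A B P D E : Cplx,
    qpoch_inf_is (Copp (Cpow q 9)) (Cpow q 8) A /\
    qpoch_inf_is (Copp (Cpow q 7)) (Cpow q 8) B /\
    qpoch_inf_is (Cpow q 8) (Cpow q 8) P /\
    qpoch_inf_is (Cpow q 2) (Cpow q 4) D /\
    qpoch_inf_is (Cpow q 4) (Cpow q 4) E /\
    E <> C0 /\
    Ccv (Cpsum (fun n =>
           Cdiv (Cmul (Cmul (Cpow (RtoC (-1)) n) (qpoch q (Cpow q 2) (2 * n)))
                      (Cpow q (2 * n * n + 4 * n)))
                (Cmul (qpoch (Cpow q 8) (Cpow q 8) n)
                      (qpoch (Copp (Cpow q 2)) (Cpow q 4) (S n)))))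
        (Cdiv (Cmul (Cmul (Cmul A B) P) D) E).
Proof.
  assert (lt1 : forall k, (1 <= k)%nat -> Cnorm (Cpow q k) < 1) by (intros; apply npow_lt; auto).
  assert (h4 := lt1 4%nat ltac:(lia)). assert (h8 := lt1 8%nat ltac:(lia)).
  destruct (qpoch_conv (Copp (Cpow q 9)) (Cpow q 8) h8) as [A HA].
  destruct (qpoch_conv (Copp (Cpow q 7)) (Cpow q 8) h8) as [B HB].
  destruct (qpoch_conv (Cpow q 8) (Cpow q 8) h8) as [P HP].
  destruct (qpoch_conv (Cpow q 2) (Cpow q 4) h4) as [D HD].
  destruct (qpoch_conv (Cpow q 4) (Cpow q 4) h4) as [E HE].
  destruct (qpoch_conv (Copp (Cpow q 6)) (Cpow q 4) h4) as [Z HZ].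
  destruct (qpoch_conv (Copp (Cpow q 2)) (Cpow q 4) h4) as [Mm HMm].
  assert (nE : E <> C0) by (apply (qpoch_lim_neq0 _ _ _ h4 h4 HE)).
  assert (nP : P <> C0) by (apply (qpoch_lim_neq0 _ _ _ h8 h8 HP)).
  assert (nD : D <> C0) by (apply (qpoch_lim_neq0 _ _ _ h4 (lt1 2%nat ltac:(lia)) HD)).
  assert (nZ : Z <> C0) by (apply (qpoch_lim_neq0 (Copp (Cpow q 6)) (Cpow q 4) Z h4); auto; rewrite Cnorm_opp; apply lt1; lia).
  assert (nk : Csub C1 (Copp (Cpow q 2)) <> C0) by (apply Csub1_neq0; rewrite Cnorm_opp; apply lt1; lia).
  assert (EM : Mm = Cmul (Csub C1 (Copp (Cpow q 2))) Z).
  { unfold qpoch_inf_is in HMm, HZ. apply Ccv_shift in HMm. apply (Ccv_unique _ _ _ HMm).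
    apply (Ccv_ext (fun n => Cmul (Csub C1 (Copp (Cpow q 2))) (qpoch (Copp (Cpow q 6)) (Cpow q 4) n))).
    intro n. symmetry. apply pochD. apply Ccv_mul; auto. apply Ccv_const. }
  assert (EE : E = Cmul (Cmul P D) Mm).
  { unfold qpoch_inf_is in HE, HP, HD, HMm. apply (Ccv_subseq _ _ (fun N => 2 * N)%nat) in HE; [|intro; lia].
    apply (Ccv_unique _ _ _ HE). eapply Ccv_ext. intro N. symmetry. apply pochE.
    apply Ccv_mul; auto. apply Ccv_mul; auto. }
  exists A, B, P, D, E. repeat split; auto.
  assert (HS := S1_lim q hq0 hq B A Z).
  assert (HB' : qpoch_inf_is (Cmul q (Copp (Cpow q 6))) (Cmul (Cpow q 4) (Cpow q 4)) B).
  { replace (Cmul q (Copp (Cpow q 6))) with (Copp (Cpow q 7)) by (simpl; ring).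
    replace (Cmul (Cpow q 4) (Cpow q 4)) with (Cpow q 8) by (simpl; ring). auto. }
  assert (HA' : qpoch_inf_is (Cmul (Cpow q 3) (Copp (Cpow q 6))) (Cmul (Cpow q 4) (Cpow q 4)) A).
  { replace (Cmul (Cpow q 3) (Copp (Cpow q 6))) with (Copp (Cpow q 9)) by (simpl; ring).
    replace (Cmul (Cpow q 4) (Cpow q 4)) with (Cpow q 8) by (simpl; ring). auto. }
  specialize (HS HB' HA' HZ).
  eapply Ccv_ext. intro N. symmetry. etransitivity. apply Cpsum_ext. intro n. apply (term_eq q hq hq0 n).
  apply Cpsum_scale.
  replace (Cdiv (Cmul (Cmul (Cmul A B) P) D) E) with (Cmul (Cdiv (Cmul B A) Z) (Cinv (Csub C1 (Copp (Cpow q 2))))).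
  2:{ rewrite EE, EM. fld. }
  apply Ccv_mul; auto. apply Ccv_const.
Qed.

Theorem mainTheorem6 (q : Cplx) (hq : Cnorm q < 1) :
  exists A B P D E : Cplx,
    qpoch_inf_is (Copp (Cpow q 9)) (Cpow q 8) A /\
    qpoch_inf_is (Copp (Cpow q 7)) (Cpow q 8) B /\
    qpoch_inf_is (Cpow q 8) (Cpow q 8) P /\
    qpoch_inf_is (Cpow q 2) (Cpow q 4) D /\
    qpoch_inf_is (Cpow q 4) (Cpow q 4) E /\
    E <> C0 /\
    Ccv (Cpsum (fun n =>
           Cdiv (Cmul (Cmul (Cpow (RtoC (-1)) n) (qpoch q (Cpow q 2) (2 * n)))
                      (Cpow q (2 * n * n + 4 * n)))
                (Cmul (qpoch (Cpow q 8) (Cpow q 8) n)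
                      (qpoch (Copp (Cpow q 2)) (Cpow q 4) (S n)))))
        (Cdiv (Cmul (Cmul (Cmul A B) P) D) E).
Proof.
  destruct (classic (q = C0)) as [Hq0|Hq0]; [|apply main_nz; auto].
  subst q.
  assert (Z : forall a Q, a = C0 -> qpoch_inf_is a Q C1).
  { intros a Q Ha. unfold qpoch_inf_is. apply (Ccv_ext (fun _ => C1)). intro n. symmetry. apply qpoch_zero; auto. apply Ccv_const. }
  assert (P0 : forall k, Copp (Cpow C0 (S k)) = C0) by (intro k; rewrite Cpow0; ring).
  exists C1, C1, C1, C1, C1. repeat split.
  - apply Z. apply (P0 8%nat).
  - apply Z. apply (P0 6%nat).
  - apply Z. apply (Cpow0 7).
  - apply Z. apply (Cpow0 1).
  - apply Z. apply (Cpow0 3).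
  - exact C1_neq0.
  - replace (Cdiv (Cmul (Cmul (Cmul C1 C1) C1) C1) C1) with C1 by fld.
    apply Ccv_unshift. apply (Ccv_ext (fun _ => C1)); [|apply Ccv_const].
    intro n. symmetry. induction n.
    + simpl Cpsum. fld.
    + change (Cpsum ?f (S (S n))) with (Cadd (Cpsum f (S n)) (f (S n))). rewrite IHn.
      replace (2 * S n * S n + 4 * S n)%nat with (S (2 * S n * S n + 4 * n + 3)) by lia. rewrite !Cpow0.
      unfold Cdiv. ring.
Qed.
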